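(* Let $a,b>0$ and let $f,g:\mathbb{R}\to(0,\infty)$. If both $f(x)$ and $g(x)/f(x)$ are monotonically increasing in $x$, then for any $x_1<x_2$, $$\frac{b+g(x_1)}{a+f(x_1)}\le\frac ba\vee\frac{b+g(x_2)}{a+f(x_2)}.$$ Provided that $\lim_{x\to\infty}(b+g(x))/(a+f(x))$ exists, for any $x_0\in\mathbb{R}$, $$\frac{b+g(x_0)}{a+f(x_0)}\le\frac ba\vee\lim_{x\to\infty}\frac{b+g(x)}{a+f(x)}.$$
   Context: $u\vee v=\max(u,v)$; ''monotonically increasing'' means non-decreasing. *)

(* Defs.v *)
From HB Require Import structures.
From mathcomp Require Import all_boot all_order all_algebra.
From mathcomp Require Import all_classical all_reals all_analysis.

(* Main.v *)
Require Import Defs.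
From HB Require Import structures.
From mathcomp Require Import all_boot all_order all_algebra.
From mathcomp Require Import all_classical all_reals all_analysis.
From mathcomp Require Import lra.
Import Order.TTheory GRing.Theory Num.Theory.
Import numFieldNormedType.Exports.
Local Open Scope ring_scope.
Local Open Scope classical_set_scope.

Lemma key (R : realType) (a b f1 f2 r1 r2 : R) :
  0 < a -> 0 < b -> 0 < f1 -> 0 < f2 -> f1 <= f2 -> r1 <= r2 ->
  (b + r1 * f1) / (a + f1) <= Num.max (b / a) ((b + r2 * f2) / (a + f2)).
Proof.
move=> ha hb hf1 hf2 hf hr.
have ha1 : 0 < a + f1 by lra.
have ha2 : 0 < a + f2 by lra.
have [hr1|hr1] := lerP (a * r1) b.
- rewrite le_max; apply/orP; left.
  rewrite ler_pdivrMr // mulrAC ler_pdivlMr //.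
  have h0 : 0 <= (b - a * r1) * f1 by apply: mulr_ge0; lra.
  lra.
- rewrite le_max; apply/orP; right.
  rewrite ler_pdivrMr // mulrAC ler_pdivlMr //.
  have h1 : 0 <= (a * r1 - b) * (f2 - f1) by apply: mulr_ge0; lra.
  have h2 : 0 <= (r2 - r1) * (a * f2 + f1 * f2).
    apply: mulr_ge0; first lra.
    by apply: addr_ge0; apply: ltW; apply: mulr_gt0.
  lra.
Qed.

Theorem lemma11 (R : realType) (a b : R) (f g : R -> R)
  (ha : 0 < a) (hb : 0 < b)
  (hfpos : forall x, 0 < f x) (hgpos : forall x, 0 < g x)
  (hfinc : forall x y, x <= y -> f x <= f y)
  (hgfinc : forall x y, x <= y -> g x / f x <= g y / f y) :
  (forall x1 x2, x1 < x2 ->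
     (b + g x1) / (a + f x1) <= Num.max (b / a) ((b + g x2) / (a + f x2)))
  /\
  (cvg ((b + g x) / (a + f x) @[x --> +oo]) ->
   forall x0 : R,
     (b + g x0) / (a + f x0) <=
       Num.max (b / a) (lim ((b + g x) / (a + f x) @[x --> +oo]))).
Proof.
have gE : forall x, g x = (g x / f x) * f x.
  by move=> x; rewrite divfK // gt_eqF.
have P1 : forall x1 x2, x1 < x2 ->
     (b + g x1) / (a + f x1) <= Num.max (b / a) ((b + g x2) / (a + f x2)).
  move=> x1 x2 /ltW h; rewrite (gE x1) (gE x2); apply: key => //.
  exact: hfinc.
  exact: hgfinc.
split => // hc x0.
have [h|h] := lerP ((b + g x0) / (a + f x0)) (b / a).
  by rewrite le_max h.
rewrite le_max; apply/orP; right.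
apply: limr_ge => //.
exists x0; split; first exact: num_real.
move=> x hx.
have := P1 _ _ hx.
rewrite le_max => /orP[h'|//].
by move: h; rewrite ltNge h'.
Qed.
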